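(* (Stability.) Let $1\le m\le n$, $x=(x_1,\dots,x_m)$, $y=(y_1,\dots,y_n)$, and write $x^{(m)}=(x_1,\dots,x_{m-1})$, $y^{(n)}=(y_1,\dots,y_{n-1})$. Then \[F(u;x,y;t)\big|_{x_my_n=1}=F(u;x^{(m)},y^{(n)};t)\quad\text{and}\quad F(u;x,y;t)\big|_{x_m=y_n=0}=(1-u)F(ut;x^{(m)},y^{(n)};t).\]
   Context: For $x=(x_1,\dots,x_m)$, $y=(y_1,\dots,y_n)$, \[F(u;x,y;t)=\sum_{I\subseteq\{1,\dots,m\}}(-u)^{|I|}t^{\binom{|I|}{2}}\prod_{i\in I,\ j\in\{1,\dots,m\}\setminus I}\frac{tx_i-x_j}{x_i-x_j}\prod_{i\in I}\prod_{j=1}^n\frac{1-x_iy_j}{1-tx_iy_j}.\] *)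

(* Defs.v *)
From mathcomp Require Import all_boot all_order all_algebra.
Set Implicit Arguments. Unset Strict Implicit. Unset Printing Implicit Defensive.
Import GRing.Theory.
Local Open Scope ring_scope.

(* F(u;x,y;t) evaluated at a point of a field K, x = (x_1..x_m), y = (y_1..y_n)
   (indices shifted to 0..m-1, 0..n-1). *)
Definition Ffun (K : fieldType) (m n : nat) (u : K) (x : 'I_m -> K)
    (y : 'I_n -> K) (t : K) : K :=
  \sum_(I : {set 'I_m})
    ((- u) ^+ #|I| * t ^+ 'C(#|I|, 2)
     * (\prod_(i in I) \prod_(j in ~: I) ((t * x i - x j) / (x i - x j)))
     * (\prod_(i in I) \prod_(j < n) ((1 - x i * y j) / (1 - t * x i * y j)))).

Definition droplast (K : Type) (m : nat) (x : 'I_m.+1 -> K) : 'I_m -> K :=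
  fun i => x (widen_ord (leqnSn m) i).

(* Main.v *)
Require Import Defs.
From mathcomp Require Import all_boot all_order all_algebra.
From mathcomp Require Import ring.
Import GRing.Theory.
Local Open Scope ring_scope.

Section Helpers.
Variable m : nat.
Let wd := widen_ord (leqnSn m).

Lemma wd_inj : injective wd.
Proof. by move=> a b /(congr1 val) /= /val_inj. Qed.

Definition W (J : {set 'I_m}) : {set 'I_m.+1} := [set wd i | i in J].

Lemma memW J i : (wd i \in W J) = (i \in J).
Proof. by rewrite mem_imset //; apply: wd_inj. Qed.

Lemma wd_max i : (wd i == ord_max) = false.
Proof. by apply/negbTE; rewrite -val_eqE /= neq_ltn ltn_ord. Qed.

Lemma maxW J : (ord_max \in W J) = false.
Proof. by apply/negbTE/imsetP => -[i _ /eqP]; rewrite eq_sym wd_max. Qed.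

Lemma cardW J : #|W J| = #|J|.
Proof. by rewrite card_imset //; apply: wd_inj. Qed.

Lemma cardW1 J : #|ord_max |: W J| = #|J|.+1.
Proof. by rewrite cardsU1 maxW cardW. Qed.

Lemma ord_case (k : 'I_m.+1) : k = ord_max \/ exists i, k = wd i.
Proof.
case: (unliftP ord_max k) => [j ->|->]; last by left.
right; exists j; apply: val_inj; exact: lift_max.
Qed.

Definition hinv (I : {set 'I_m.+1}) : {set 'I_m} := [set i | wd i \in I].

Lemma sum_split (K : fieldType) (F : {set 'I_m.+1} -> K) :
  \sum_(I : {set 'I_m.+1}) F I =
  \sum_(J : {set 'I_m}) F (W J) + \sum_(J : {set 'I_m}) F (ord_max |: W J).
Proof.
rewrite (bigID (fun I : {set 'I_m.+1} => ord_max \in I)) /= addrC; congr (_ + _).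
- rewrite (reindex_onto W hinv) /=.
    apply: eq_bigl => J; rewrite maxW /=; apply/eqP/setP => i.
    by rewrite inE memW.
  move=> I HI; apply/setP => k; case: (ord_case k) => [->|[i ->]].
    by rewrite maxW (negbTE HI).
  by rewrite memW inE.
- rewrite (reindex_onto (fun J => ord_max |: W J) hinv) /=.
    apply: eq_bigl => J; rewrite setU11 /=; apply/eqP/setP => i.
    by rewrite inE in_setU1 wd_max memW.
  move=> I HI; apply/setP => k; case: (ord_case k) => [->|[i ->]].
    by rewrite setU11 HI.
  by rewrite in_setU1 wd_max memW inE.
Qed.

Lemma prod_split (K : fieldType) (G : 'I_m.+1 -> K) (A : {pred 'I_m.+1}) :
  \prod_(j in A) G j =
  (\prod_(j < m | wd j \in A) G (wd j)) * (if ord_max \in A then G ord_max else 1).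
Proof. by rewrite big_mkcond big_ord_recr /= -big_mkcond. Qed.

Lemma prodW (K : fieldType) (G : 'I_m.+1 -> K) J :
  \prod_(i in W J) G i = \prod_(i in J) G (wd i).
Proof.
rewrite prod_split maxW mulr1; apply: eq_bigl => i; exact: memW.
Qed.

Lemma prodCW (K : fieldType) (G : 'I_m.+1 -> K) J :
  \prod_(i in ~: W J) G i = \prod_(i in ~: J) G (wd i) * G ord_max.
Proof.
rewrite prod_split inE maxW /=; congr (_ * _); apply: eq_bigl => i.
by rewrite !inE memW.
Qed.

Lemma prodW1 (K : fieldType) (G : 'I_m.+1 -> K) J :
  \prod_(i in ord_max |: W J) G i = \prod_(i in J) G (wd i) * G ord_max.
Proof.
rewrite prod_split setU11; congr (_ * _); apply: eq_bigl => i.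
by rewrite in_setU1 wd_max memW.
Qed.

Lemma prodCW1 (K : fieldType) (G : 'I_m.+1 -> K) J :
  \prod_(i in ~: (ord_max |: W J)) G i = \prod_(i in ~: J) G (wd i).
Proof.
rewrite prod_split inE setU11 /= mulr1; apply: eq_bigl => i.
by rewrite !inE wd_max memW.
Qed.

End Helpers.

Lemma rearr (K : comNzRingType) (c P1 A P2 B : K) :
  A * B = 1 -> c * (P1 * A) * (P2 * B) = c * P1 * P2.
Proof. by move=> h; transitivity (c * P1 * P2 * (A * B)); [ring | rewrite h mulr1]. Qed.

Lemma rearr2 (K : comNzRingType) (u t P1 A P2 B : K) k :
  A = t ^+ k -> B = 1 ->
  (- u) ^+ k * t ^+ 'C(k, 2) * (P1 * A) * (P2 * B) =
  (- (u * t)) ^+ k * t ^+ 'C(k, 2) * P1 * P2.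
Proof. move=> -> ->; rewrite -mulNr exprMn; ring. Qed.

Lemma rearr3 (K : comNzRingType) (u t P1 A P2 B C : K) k :
  A = 1 -> B = 1 -> C = 1 ->
  (- u) ^+ k.+1 * t ^+ 'C(k.+1, 2) * (P1 * A) * (P2 * B * C) =
  - (u * ((- (u * t)) ^+ k * t ^+ 'C(k, 2) * P1 * P2)).
Proof.
move=> -> -> ->; rewrite binS bin1 exprD exprS (_ : -(u*t) = (-u)*t) ?exprMn; [ring|ring].
Qed.

Lemma rearrP (K : fieldType) (I : finType) (J : {pred I}) (c : K) f a g b :
  (forall i, i \in J -> a i * b i = 1) ->
  c * \prod_(i in J) (f i * a i) * \prod_(i in J) (g i * b i) =
  c * \prod_(i in J) f i * \prod_(i in J) g i.
Proof.
move=> h; rewrite !big_split /=; apply: rearr; rewrite -big_split; exact: big1.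
Qed.

Lemma rearrP2 (K : fieldType) (I : finType) (J : {pred I}) (u t : K) f a g b :
  (forall i, i \in J -> a i = t) -> (forall i, i \in J -> b i = 1) ->
  (- u) ^+ #|J| * t ^+ 'C(#|J|, 2) * \prod_(i in J) (f i * a i) * \prod_(i in J) (g i * b i) =
  (- (u * t)) ^+ #|J| * t ^+ 'C(#|J|, 2) * \prod_(i in J) f i * \prod_(i in J) g i.
Proof.
move=> ha hb; rewrite !big_split /=; apply: rearr2; last exact: big1.
by rewrite -prodr_const; apply: eq_bigr.
Qed.

Lemma rearrP3 (K : fieldType) (I : finType) (J : {pred I}) (u t : K) f A g b C :
  A = 1 -> (forall i, i \in J -> b i = 1) -> C = 1 ->
  (- u) ^+ #|J|.+1 * t ^+ 'C(#|J|.+1, 2) * (\prod_(i in J) f i * A) *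
     (\prod_(i in J) (g i * b i) * C) =
  - (u * ((- (u * t)) ^+ #|J| * t ^+ 'C(#|J|, 2) * \prod_(i in J) f i * \prod_(i in J) g i)).
Proof.
move=> hA hb hC; rewrite big_split /=; apply: rearr3 => //; exact: big1.
Qed.

Theorem lemma3p1 (K : fieldType) (m n : nat) (hmn : (m <= n)%N)
  (u t : K) (x : 'I_m.+1 -> K) (y : 'I_n.+1 -> K)
  (hx : injective x)
  (hden : forall i j, 1 - t * x i * y j != 0) :
  (x ord_max * y ord_max = 1 ->
     Ffun u x y t = Ffun u (droplast x) (droplast y) t) /\
  (x ord_max = 0 -> y ord_max = 0 ->
     Ffun u x y t = (1 - u) * Ffun (u * t) (droplast x) (droplast y) t).
Proof.
have xne : forall i, x (widen_ord (leqnSn m) i) - x ord_max != 0.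
  move=> i; rewrite subr_eq0; apply/eqP => /hx /eqP; by rewrite wd_max.
split.
- move=> hxy; rewrite /Ffun sum_split.
  rewrite [X in _ + X]big1 ?addr0; last first.
    move=> J _; rewrite [X in _ * X]prod_split setU11 big_ord_recr /= hxy subrr.
    by rewrite mul0r !mulr0.
  apply: eq_bigr => J _.
  rewrite cardW !prodW /droplast.
  under eq_bigr do rewrite prodCW.
  under [X in _ * X = _]eq_bigr do rewrite big_ord_recr /=.
  apply: rearrP => i _.
  rewrite mulf_div.
  have -> : (t * x (widen_ord (leqnSn m) i) - x ord_max)
              * (1 - x (widen_ord (leqnSn m) i) * y ord_max) =
            (x (widen_ord (leqnSn m) i) - x ord_max)
              * (1 - t * x (widen_ord (leqnSn m) i) * y ord_max).
    apply/eqP; rewrite -subr_eq0; apply/eqP.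
    transitivity ((t - 1) * x (widen_ord (leqnSn m) i) * (1 - x ord_max * y ord_max)).
      by ring.
    by rewrite hxy subrr mulr0.
  by rewrite divff ?mulf_neq0.
- move=> hx0 hy0; rewrite /Ffun sum_split mulrBl mul1r; congr (_ + _).
    apply: eq_bigr => J _.
    rewrite cardW !prodW /droplast.
    under eq_bigr do rewrite prodCW.
    under [X in _ * X = _]eq_bigr do rewrite big_ord_recr /=.
    apply: rearrP2 => i _.
      by rewrite hx0 !subr0 mulfK //; have := xne i; rewrite hx0 subr0.
    by rewrite hy0 !mulr0 subr0 divr1.
  rewrite mulr_sumr -sumrN; apply: eq_bigr => J _.
  rewrite cardW1 !prodW1 /droplast prodCW1.
  under eq_bigr do rewrite prodCW1.
  under [X in _ * (X * _) = _]eq_bigr do rewrite big_ord_recr /=.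
  apply: rearrP3.
  - apply: big1 => i _; rewrite hx0 mulr0 !sub0r divff // oppr_eq0.
    by have := xne i; rewrite hx0 subr0.
  - by move=> i _; rewrite hy0 !mulr0 subr0 divr1.
  - by apply: big1 => i _; rewrite hx0 !mulr0 !mul0r subr0 divr1.
Qed.
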